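(* Let $(\Omega,\Sigma,\mathbb{P})$ be a probability space, let $X$ be an ideal of $L_0(\Sigma)$, and let $Y$ be a sublattice of $X$ such that the constant function $\mathbb 1\in Y$. Then the following are equivalent: (a) $Y$ is order closed in $X$; (b) $Y=L_0(\sigma(Y))\cap X$.
   Context: $L_0(\Sigma)$ denotes the vector lattice of all real-valued $\Sigma$-measurable functions modulo a.e. equality, with the a.e. pointwise order. An ideal of $L_0(\Sigma)$ is a vector subspace $X$ such that $|x|\le|y|$ a.e. and $y\in X$ imply $x\in X$. A sublattice is a vector subspace closed under $y\mapsto|y|$. A net $(x_\alpha)$ converges in order to $x$ in $X$ if there is a net $(z_\beta)$ in $X$ with $z_\beta\downarrow 0$ such that for every $\beta$ there is $\alpha_0$ with $|x_\alpha-x|\le z_\beta$ for all $\alpha\ge\alpha_0$; a subset $A\subset X$ is order closed if it contains every order limit in $X$ of nets from $A$. For $Y\subset L_0(\Sigma)$, $\sigma(Y)$ is the smallest sub-$\sigma$-algebra of $\Sigma$ which makes all members of $Y$ measurable and contains all $\mathbb{P}$-null sets, and $L_0(\sigma(Y))$ is the set of functions in $L_0(\Sigma)$ measurable with respect to $\sigma(Y)$. *)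

(* Defs.v *)
From HB Require Import structures.
From mathcomp Require Import all_boot all_order all_algebra.
From mathcomp Require Import all_classical all_reals all_analysis.
Set Implicit Arguments.
Unset Strict Implicit.
Unset Printing Implicit Defensive.
Import Order.TTheory GRing.Theory Num.Theory.
Local Open Scope classical_set_scope.
Local Open Scope ring_scope.

(* Encoding of L_0(Sigma): an element of L_0(Sigma) is represented by any of
   its Sigma-measurable representatives T -> R; a subset of L_0(Sigma) is
   represented by the set of all representatives of its members, i.e. by a
   set of measurable functions closed under a.e. equality. *)

Section L0.
Context {d : measure_display} {T : measurableType d} {R : realType}.
Variable mu : probability T R.

Definition ae_le (f g : T -> R) : Prop := {ae mu, forall x, f x <= g x}.

Definition L0set (A : set (T -> R)) : Prop :=
  (forall f, A f -> measurable_fun setT f) /\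
  (forall f g, A f -> measurable_fun setT g ->
     {ae mu, forall x, f x = g x} -> A g).

Definition vsubspace (A : set (T -> R)) : Prop :=
  A (fun _ => 0) /\
  (forall f g, A f -> A g -> A (fun x => f x + g x)) /\
  (forall (c : R) f, A f -> A (fun x => c * f x)).

Definition ideal (X : set (T -> R)) : Prop :=
  L0set X /\ vsubspace X /\
  (forall (f g : T -> R), measurable_fun setT f -> X g ->
     ae_le (fun x => `|f x|) (fun x => `|g x|) -> X f).

Definition sublattice (X Y : set (T -> R)) : Prop :=
  L0set Y /\ Y `<=` X /\ vsubspace Y /\
  (forall f, Y f -> Y (fun x => `|f x|)).

Definition directed (I : Type) (le : I -> I -> Prop) : Prop :=
  inhabited I /\
  (forall i, le i i) /\
  (forall i j k, le i j -> le j k -> le i k) /\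
  (forall i j, exists k, le i k /\ le j k).

Definition decr_to_zero (X : set (T -> R)) (J : Type) (leJ : J -> J -> Prop)
  (z : J -> T -> R) : Prop :=
  (forall b b', leJ b b' -> ae_le (z b') (z b)) /\
  (forall b, ae_le (fun _ => 0) (z b)) /\
  (forall w, X w -> (forall b, ae_le w (z b)) -> ae_le w (fun _ => 0)).

Definition order_conv (X : set (T -> R)) (I : Type) (leI : I -> I -> Prop)
  (xn : I -> T -> R) (x0 : T -> R) : Prop :=
  exists (J : Type) (leJ : J -> J -> Prop) (z : J -> T -> R),
    directed leJ /\ (forall b, X (z b)) /\ decr_to_zero X leJ z /\
    forall b, exists a0, forall a, leI a0 a ->
      ae_le (fun x => `|xn a x - x0 x|) (z b).

Definition order_closed (X A : set (T -> R)) : Prop :=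
  forall (I : Type) (leI : I -> I -> Prop) (xn : I -> T -> R) (x0 : T -> R),
    directed leI -> (forall a, A (xn a)) -> X x0 ->
    order_conv X leI xn x0 -> A x0.

Definition sigmaY (Y : set (T -> R)) : set (set T) :=
  <<s setT,
    [set A | exists f (B : set R), Y f /\ measurable B /\ A = f @^-1` B] `|`
    [set N | measurable N /\ mu N = 0%E] >>.

Definition L0_of (G : set (set T)) : set (T -> R) :=
  [set f | measurable_fun setT f /\
           forall B : set R, measurable B -> G (f @^-1` B)].

End L0.

(* Main.v *)
Require Import Defs.
From HB Require Import structures.
From mathcomp Require Import all_boot all_order all_algebra.
From mathcomp Require Import all_classical all_reals all_analysis.
From mathcomp Require Import measurable_realfun.
From mathcomp Require Import lra.
Set Implicit Arguments.
Unset Strict Implicit.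
Unset Printing Implicit Defensive.
Import Order.TTheory GRing.Theory Num.Theory.
Local Open Scope classical_set_scope.
Local Open Scope ring_scope.
Lemma maxE_half (R : realType) (a b : R) : Num.max a b = 2^-1 * ((a + b) + `|a - b|).
Proof.
have [ab|ba] := leP a b.
  rewrite ler0_norm ?subr_le0 //; lra.
rewrite gtr0_norm ?subr_gt0 //; lra.
Qed.

Lemma minE_max (R : realType) (a b : R) : Num.min a b = (a + b) - Num.max a b.
Proof. have [ab|ba] := leP a b; lra. Qed.

Section Basics.
Context {d : measure_display} {T : measurableType d} {R : realType}.
Context (mu : probability T R) (X Y : set (T -> R)).
Context (hX : ideal mu X) (hY : sublattice mu X Y) (h1 : Y (fun _ => 1)).
Implicit Types f g : T -> R.

Lemma Xmeas f : X f -> measurable_fun setT f.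
Proof. by move: hX => [[H _] _]; exact: H. Qed.
Lemma Ymeas f : Y f -> measurable_fun setT f.
Proof. by move: hY => [[H _] _]; exact: H. Qed.
Lemma YX f : Y f -> X f.
Proof. by move: hY => [_ [H _]]; exact: H. Qed.
Lemma Yext f g : Y f -> (forall x, f x = g x) -> Y g.
Proof. by move=> Yf fg; have <- : f = g by apply/funext. Qed.
Lemma Xext f g : X f -> (forall x, f x = g x) -> X g.
Proof. by move=> Yf fg; have <- : f = g by apply/funext. Qed.
Lemma Yae f g : Y f -> measurable_fun setT g -> {ae mu, forall x, f x = g x} -> Y g.
Proof. by move: hY => [[_ H] _]; exact: H. Qed.
Lemma Y0 : Y (fun _ => 0).
Proof. by move: hY => [_ [_ [[H _] _]]]; exact: H. Qed.
Lemma YD f g : Y f -> Y g -> Y (fun x => f x + g x).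
Proof. by move: hY => [_ [_ [[_ [H _]] _]]]; exact: H. Qed.
Lemma YZ c f : Y f -> Y (fun x => c * f x).
Proof. by move: hY => [_ [_ [[_ [_ H]] _]]]; exact: H. Qed.
Lemma Yabs f : Y f -> Y (fun x => `|f x|).
Proof. by move: hY => [_ [_ [_ H]]]; exact: H. Qed.
Lemma YB f g : Y f -> Y g -> Y (fun x => f x - g x).
Proof.
move=> Yf Yg; apply: (Yext (YD Yf (YZ (-1) Yg))) => x; by rewrite mulN1r.
Qed.
Lemma Ycst c : Y (fun _ => c).
Proof. by apply: (Yext (YZ c h1)) => x; rewrite mulr1. Qed.
Lemma Ymax f g : Y f -> Y g -> Y (fun x => Num.max (f x) (g x)).
Proof.
move=> Yf Yg; apply: (Yext (YZ 2^-1 (YD (YD Yf Yg) (Yabs (YB Yf Yg))))).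
by move=> x; rewrite maxE_half.
Qed.
Lemma Ymin f g : Y f -> Y g -> Y (fun x => Num.min (f x) (g x)).
Proof.
move=> Yf Yg; apply: (Yext (YB (YD Yf Yg) (Ymax Yf Yg))).
by move=> x; rewrite minE_max.
Qed.

Lemma X0 : X (fun _ => 0).
Proof. by move: hX => [_ [[H _] _]]; exact: H. Qed.
Lemma XD f g : X f -> X g -> X (fun x => f x + g x).
Proof. by move: hX => [_ [[_ [H _]] _]]; exact: H. Qed.
Lemma XZ c f : X f -> X (fun x => c * f x).
Proof. by move: hX => [_ [[_ [_ H]] _]]; exact: H. Qed.
Lemma XB f g : X f -> X g -> X (fun x => f x - g x).
Proof.
move=> Yf Yg; apply: (Xext (XD Yf (XZ (-1) Yg))) => x; by rewrite mulN1r.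
Qed.
Lemma Xdom f g : measurable_fun setT f -> X g -> (forall x, `|f x| <= `|g x|) -> X f.
Proof. move: hX => [_ [_ H]] mf Xg fg; apply: (H f g mf Xg); exact: aeW. Qed.
Lemma Xcst c : X (fun _ => c).
Proof. exact/YX/Ycst. Qed.

Lemma Y_mono (hoc : order_closed mu X Y) (s : nat -> T -> R) f :
  (forall n, Y (s n)) -> X f ->
  (forall n m x, (n <= m)%N -> s n x <= s m x) ->
  (forall n x, s n x <= f x) ->
  (forall x e, 0 < e -> exists n, f x - e < s n x) -> Y f.
Proof.
move=> Ys Xf smono sf sapp.
have dir : directed (fun n m : nat => (n <= m)%N).
  split; first by constructor; exact 0%N.
  split; first by move=> i.
  split; first by move=> i j k; apply: leq_trans.
  by move=> i j; exists (maxn i j); rewrite leq_maxl leq_maxr.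
apply: (hoc nat (fun n m => (n <= m)%N) s f dir Ys Xf).
exists nat, (fun n m => (n <= m)%N), (fun n x => f x - s n x).
split => //; split; first by move=> b; apply: XB => //; exact: YX.
split; first split.
- move=> b b' bb'; apply: aeW => x.
  have := smono _ _ x bb'; lra.
- split; first by move=> b; apply: aeW => x; rewrite subr_ge0.
  move=> w _ hw; have := ae_foralln hw; apply: filterS => x Hx.
  rewrite leNgt; apply/negP => wx0; have [n hn] := sapp x (w x) wx0.
  have := Hx n; lra.
- move=> b; exists b => a ba; apply: aeW => x.
  have := smono _ _ x ba; have := sf a x; rewrite ler0_norm ?subr_le0 //; lra.
Qed.


Lemma ind1 (A : set T) x : A x -> \1_A x = 1 :> R.
Proof. by move=> Ax; rewrite indicE mem_set. Qed.
Lemma ind0 (A : set T) x : ~ A x -> \1_A x = 0 :> R.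
Proof. by move=> Ax; rewrite indicE memNset. Qed.
Lemma ind_ge0 (A : set T) x : 0 <= \1_A x :> R.
Proof. by rewrite indicE ler0n. Qed.
Lemma ind_le1 (A : set T) x : \1_A x <= 1 :> R.
Proof. by rewrite indicE lern1 leq_b1. Qed.
Lemma ind_le (A B : set T) x : (A x -> B x) -> \1_A x <= \1_B x :> R.
Proof.
move=> AB; have [Ax|Ax] := pselect (A x); last by rewrite ind0 // ind_ge0.
by rewrite !ind1 //; exact: AB.
Qed.
Lemma ind_abs (A : set T) x : `|\1_A x| <= `|1 : R|.
Proof. by rewrite normr1 ger0_norm ?ind_ge0 ?ind_le1. Qed.

Definition Dset := [set A : set T | measurable A /\ Y (\1_A : T -> R)].

Lemma D0 : Dset set0.
Proof. split => //; apply: (Yext Y0) => x; by rewrite ind0. Qed.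

Lemma DC A : Dset A -> Dset (setT `\` A).
Proof.
move=> [mA YA]; split; first exact: measurableD.
apply: (Yext (YB (Ycst 1) YA)) => x.
have [Ax|Ax] := pselect (A x).
  by rewrite ind1 // (ind0 (A := setT `\` A)) ?subrr // => -[].
by rewrite ind0 // ind1 ?subr0.
Qed.

Lemma DU A B : Dset A -> Dset B -> Dset (A `|` B).
Proof.
move=> [mA YA] [mB YB']; split; first exact: measurableU.
apply: (Yext (Ymax YA YB')) => x.
have [Ax|Ax] := pselect (A x); have [Bx|Bx] := pselect (B x).
- by rewrite !ind1 ?maxxx //; left.
- by rewrite (ind1 Ax) (ind0 Bx) ind1 ?maxEle ?ler10 //; left.
- by rewrite (ind0 Ax) (ind1 Bx) ind1 ?maxEle ?ler01 //; right.
- by rewrite !ind0 ?maxxx // => -[].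
Qed.

Lemma Dbigcup (hoc : order_closed mu X Y) (F : (set T)^nat) :
  (forall n, Dset (F n)) -> Dset (\bigcup_n F n).
Proof.
move=> DF.
pose U n := \bigcup_(k in [set k | (k < n)%N]) F k.
have DUn n : Dset (U n).
  elim: n => [|n IH].
    suff -> : U 0%N = set0 by exact: D0.
    by apply/seteqP; split => x //= -[k] /=; rewrite ltn0.
  suff -> : U n.+1 = U n `|` F n by exact: DU.
  apply/seteqP; split => x /=.
    move=> [k /= kn Fk]; move: kn; rewrite ltnS leq_eqVlt => /orP[/eqP<-|kn].
      by right.
    by left; exists k.
  move=> [[k /= kn Fk]|Fn]; first by exists k => //=; exact: ltnW.
  by exists n => /=.
split; first by apply: bigcupT_measurable => n; case: (DF n).
apply: (Y_mono hoc (s := fun n => \1_(U n))).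
- by move=> n; case: (DUn n).
- apply: (Xdom (g := fun _ => 1)); last by move=> x; exact: ind_abs.
  + apply: measurable_realfun.measurable_indic; apply: bigcupT_measurable => n; by case: (DF n).
  + exact: Xcst.
- move=> n m x nm; apply: ind_le => -[k /= kn Fk]; exists k => //=.
  exact: leq_trans kn nm.
- by move=> n x; apply: ind_le => -[k _ Fk]; exists k.
- move=> x e e0; have [[k _ Fk]|nF] := pselect ((\bigcup_n F n) x).
    exists k.+1; rewrite !ind1; [lra|by exists k => /=|by exists k].
  exists 0%N; rewrite !ind0 //; first lra.
  by move=> -[k /=]; rewrite ltn0.
Qed.

Lemma Dnull N : measurable N -> mu N = 0%E -> Dset N.
Proof.
move=> mN N0; split => //; apply: (Yae Y0); first exact: measurable_realfun.measurable_indic.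
exists N; split => // x /= Hx; apply: contra_notP Hx => Nx.
by rewrite ind0.
Qed.

Lemma Dray (hoc : order_closed mu X Y) f c : Y f -> Dset (f @^-1` `]c, +oo[).
Proof.
move=> Yf.
have rayE x : (f @^-1` `]c, +oo[) x <-> c < f x.
  by rewrite /preimage /= in_itv /= andbT.
have mP : measurable (f @^-1` `]c, +oo[).
  rewrite -[X in measurable X]setTI; apply: (Ymeas Yf) => //.
split => //.
apply: (Y_mono hoc (s := fun n x => Num.min (n%:R * Num.max (f x - c) 0) 1)).
- move=> n; apply: Ymin; last exact: Ycst.
  apply: YZ; apply: Ymax; last exact: Ycst.
  by apply: YB => //; exact: Ycst.
- apply: (Xdom (g := fun _ => 1)); last by move=> x; exact: ind_abs.
  + exact: measurable_realfun.measurable_indic.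
  + exact: Xcst.
- move=> n m x nm.
  have p0 : 0 <= Num.max (f x - c) 0 by rewrite le_max lexx orbT.
  have nm' : n%:R <= m%:R :> R by rewrite ler_nat.
  have := ler_wpM2r p0 nm'.
  move: (n%:R * _) (m%:R * _) => a b ab.
  by case: (leP a 1); case: (leP b 1); lra.
- move=> n x; have [cx|cx] := pselect (c < f x).
    by rewrite ind1 ?rayE // ge_min lexx orbT.
  rewrite ind0 ?rayE //.
  have -> : Num.max (f x - c) 0 = 0.
    by apply/max_idPr; rewrite subr_le0 leNgt; apply/negP.
  by rewrite mulr0 ge_min lexx.
- move=> x e e0; have [cx|cx] := pselect (c < f x).
    have p0 : 0 < f x - c by rewrite subr_gt0.
    have -> : Num.max (f x - c) 0 = f x - c by apply/max_idPl/ltW.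
    exists (Num.Def.trunc ((f x - c)^-1)).+1.
    have := truncnS_gt ((f x - c)^-1).
    move: ((Num.Def.trunc _).+1%:R) => r hr.
    have : 1 < r * (f x - c).
      by rewrite -ltr_pdivrMr // div1r.
    rewrite ind1 ?rayE // => h.
    by case: (leP (r * (f x - c)) 1); lra.
  exists 0%N; rewrite ind0 ?rayE // mul0r.
  by case: (leP 0 1); lra.
Qed.

Lemma measurableR_G : (measurable : set (set R)) = <<s @measurable_realfun.RGenOInfty.G R >>.
Proof.
have E := @measurable_realfun.RGenOInfty.measurableE R.
apply: etrans; last exact: E.
reflexivity.
Qed.

Lemma Dpre (hoc : order_closed mu X Y) f B : Y f -> measurable B -> Dset (f @^-1` B).
Proof.
move=> Yf; rewrite measurableR_G => mB.
suff : [set B | Dset (f @^-1` B)] B by [].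
apply: (smallest_sub _ _ mB); last first.
  by move=> _ [c ->]; exact: Dray.
split.
- by rewrite /= preimage_set0; exact: D0.
- move=> A DA /=; have -> : f @^-1` (setT `\` A) = setT `\` f @^-1` A.
    by apply/seteqP; split => x [].
  exact: DC.
- by move=> F DF; rewrite /= preimage_bigcup; exact: Dbigcup.
Qed.

Lemma sigmaY_D (hoc : order_closed mu X Y) A : sigmaY mu Y A -> Dset A.
Proof.
apply: smallest_sub.
  split; [exact: D0|exact: DC|exact: Dbigcup].
move=> {}A [[f [B [Yf [mB ->]]]]|[mN N0]]; first exact: Dpre.
exact: Dnull.
Qed.


Lemma Ysum m (F : 'I_m -> T -> R) : (forall i, Y (F i)) -> Y (fun x => \sum_(i < m) F i x).
Proof.
elim: m F => [|m IH] F YF.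
  by apply: (Yext Y0) => x; rewrite big_ord0.
apply: (Yext (YD (IH (fun i => F (widen_ord (leqnSn m) i)) (fun i => YF _)) (YF ord_max))).
by move=> x; rewrite big_ord_recr.
Qed.

Definition Gens : set (set T) :=
  [set A | exists f (B : set R), Y f /\ measurable B /\ A = f @^-1` B] `|`
  [set N | measurable N /\ mu N = 0%E].

Lemma sigmaYE : sigmaY mu Y = <<s Gens >>.
Proof. reflexivity. Qed.

Local Notation Tp := (g_sigma_algebraType Gens).

Lemma L0_meas' f : L0_of (sigmaY mu Y) f -> measurable_fun (setT : set Tp) f.
Proof. by move=> [_ Hf] _ B mB; rewrite setTI; exact: Hf. Qed.

Lemma lt_helper (a b c e : R) : a - b < e -> a = c -> c - e < b.
Proof. move=> h <-; lra. Qed.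

Lemma Y_ge0 (hoc : order_closed mu X Y) f :
  L0_of (sigmaY mu Y) f -> X f -> (forall x, 0 <= f x) -> Y f.
Proof.
move=> Lf Xf f0.
pose fp : Tp -> \bar R := EFin \o f.
have mf : measurable_fun (setT : set Tp) fp.
  by apply/measurable_realfun.measurable_EFinP; exact: L0_meas'.
have f0' : forall x, (setT : set Tp) x -> (0 <= fp x)%E.
  by move=> x _; rewrite /= lee_fin.
pose g := approx (T:=Tp) setT fp.
have YA n k : Y (\1_(dyadic_approx (T:=Tp) setT fp n k) : T -> R).
  have : sigmaY mu Y (dyadic_approx (T:=Tp) setT fp n k).
    rewrite /dyadic_approx; case: ifPn => [kn|_]; last exact: (@measurable0 _ Tp).
    rewrite -preimage_comp; apply: mf => //.
    by apply/measurable_realfun.measurable_image_EFin; exact: measurable_itv.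
  by move/(sigmaY_D hoc) => [].
have YB n : Y (\1_(integer_approx (T:=Tp) setT fp n) : T -> R).
  have : sigmaY mu Y (integer_approx (T:=Tp) setT fp n).
    exact: (measurable_realfun.emeasurable_fun_c_infty (@measurableT _ Tp) mf).
  by move/(sigmaY_D hoc) => [].
have Yg n : Y (g n).
  rewrite /g /approx; apply: YD; last by apply: YZ; exact: YB.
  by apply: Ysum => k; apply: YZ; exact: YA.
apply: (Y_mono hoc (s := g)) => //.
- move=> n m x nm; have := nd_approx (T:=Tp) setT fp nm.
  by move/lefP; exact.
- move=> n x; have := le_approx (T:=Tp) n (x:=x) f0' I.
  by rewrite lee_fin.
- move=> x e e0.
  have := cvg_approx (T:=Tp) (x:=x) f0' I (ltry _).
  move/(@cvgrPdist_lt _ R^o) => /(_ e e0) [N _ HN].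
  exists N; have := HN N (leqnn N) => /=.
  rewrite ltr_norml => /andP[_ h]; by apply: (lt_helper h).
Qed.


Lemma L0_comp (h : R -> R) f : measurable_fun setT h -> L0_of (sigmaY mu Y) f ->
  L0_of (sigmaY mu Y) (fun x => h (f x)).
Proof.
move=> mh [mf Lf]; split; first exact: (measurableT_comp mh mf).
move=> B mB; have : measurable (setT `&` h @^-1` B) := mh measurableT B mB.
rewrite setTI => mhB; exact: Lf _ mhB.
Qed.

Lemma hmax_meas : measurable_fun (setT : set R) (fun r : R => Num.max r 0).
Proof. exact: measurable_maxr (@measurable_id _ _ _) (measurable_cst _). Qed.

Lemma norm_max0 (a : R) : `|Num.max a 0| <= `|a|.
Proof. by case: (leP a 0) => h; rewrite ?normr0 ?normr_ge0. Qed.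

Lemma dir_ab (hoc : order_closed mu X Y) : Y = L0_of (sigmaY mu Y) `&` X.
Proof.
apply/seteqP; split => f.
  move=> Yf; split; last exact: YX.
  split; first exact: Ymeas.
  by move=> B mB; apply: sub_sigma_algebra; left; exists f, B.
move=> [Lf Xf].
have L1 : L0_of (sigmaY mu Y) (fun x => Num.max (f x) 0) := L0_comp hmax_meas Lf.
have L2 : L0_of (sigmaY mu Y) (fun x => Num.max (- f x) 0) :=
  L0_comp hmax_meas (L0_comp (@oppr_measurable R setT) Lf).
have Y1 : Y (fun x => Num.max (f x) 0).
  apply: (Y_ge0 hoc L1); last by move=> x; rewrite le_max lexx orbT.
  by apply: (Xdom L1.1 Xf) => x; exact: norm_max0.
have Y2 : Y (fun x => Num.max (- f x) 0).
  apply: (Y_ge0 hoc L2); last by move=> x; rewrite le_max lexx orbT.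
  by apply: (Xdom L2.1 Xf) => x; rewrite -(normrN (f x)); exact: norm_max0.
apply: (Yext (YB Y1 Y2)) => x.
by case: (leP (f x) 0) => h; case: (leP (- f x) 0) => h'; lra.
Qed.
End Basics.
Lemma min_mono (R : realType) (a b c : R) : a <= b -> Num.min a c <= Num.min b c.
Proof. by move=> ab; case: (leP a c) => ?; case: (leP b c) => ?; lra. Qed.
Lemma max_mono (R : realType) (a b c : R) : a <= b -> Num.max a c <= Num.max b c.
Proof. by move=> ab; case: (leP a c) => ?; case: (leP b c) => ?; lra. Qed.
Lemma key_ineq (R : realType) (zc zc' zb w : R) : zc' <= zc -> zc' <= zb ->
  w <= Num.max zc 0 ->
  Num.max (Num.min w 1 - Num.max zb 0) 0 + Num.min (Num.max zc' 0) 1 <= Num.min (Num.max zc 0) 1.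
Proof.
move=> h1 h2 h4.
have CA := min_mono 1 (max_mono 0 h1).
have mA := min_mono 1 h4.
have CB : Num.min (Num.max zc' 0) 1 <= Num.max zb 0.
  apply: le_trans (max_mono 0 h2); rewrite ge_min lexx //.
move: CA mA CB.
move: (Num.min (Num.max zc' 0) 1) (Num.min (Num.max zc 0) 1) (Num.min w 1) (Num.max zb 0) => C A m B *.
by case: (leP (m - B) 0) => ?; lra.
Qed.

Section Red.
Context {d : measure_display} {T : measurableType d} {R : realType}.
Context (mu : probability T R) (X : set (T -> R)) (hX : ideal mu X).
Context (X1 : X (fun _ => 1)).

Lemma ae_and (P Q : T -> Prop) : {ae mu, forall x, P x} -> {ae mu, forall x, Q x} ->
  {ae mu, forall x, P x /\ Q x}.
Proof. by move=> hP hQ; apply: filterS (filterI hP hQ). Qed.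

Lemma ae_imp (P Q : T -> Prop) : (forall x, P x -> Q x) -> {ae mu, forall x, P x} ->
  {ae mu, forall x, Q x}.
Proof. by move=> PQ hP; apply: filterS hP. Qed.

Lemma le_int (f g : T -> R) : measurable_fun setT f -> measurable_fun setT g ->
  (forall x, 0 <= f x) -> (forall x, 0 <= g x) -> {ae mu, forall x, f x <= g x} ->
  (\int[mu]_x (f x)%:E <= \int[mu]_x (g x)%:E)%E.
Proof.
move=> mf mg f0 g0 fg.
have f0' : forall x, setT x -> (0 <= (f x)%:E)%E by move=> x _; rewrite lee_fin.
have g0' : forall x, setT x -> (0 <= (g x)%:E)%E by move=> x _; rewrite lee_fin.
apply: (ae_ge0_le_integral measurableT f0' _ g0' _); [exact/measurable_EFinP|exact/measurable_EFinP|].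
by apply: filterS fg => x h _; rewrite lee_fin.
Qed.

Lemma countable_red (J : Type) (leJ : J -> J -> Prop) (z : J -> T -> R) :
  directed leJ -> (forall b, X (z b)) -> decr_to_zero mu X leJ z ->
  exists c : nat -> J, (forall n m, (n <= m)%N -> leJ (c n) (c m)) /\
    {ae mu, forall x, forall e, 0 < e -> exists n, z (c n) x < e}.
Proof.
move=> [[j0] [lrefl [ltrans lub]]] Xz [zdec [z0 zinf]].
have mz b : measurable_fun setT (z b) := Xmeas hX (Xz b).
have [ub hub] := choice (fun p : J * J => lub p.1 p.2).
pose h b x := Num.min (Num.max (z b x) 0) 1.
have mh b : measurable_fun setT (h b).
  exact: measurable_minr (measurable_maxr (mz b) (measurable_cst _)) (measurable_cst _).
have mhE b : measurable_fun setT (fun x => (h b x)%:E).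
  exact/measurable_EFinP.
have h0 b x : 0 <= h b x by rewrite /h le_min ler01 le_max lexx orbT.
have h1 b x : h b x <= 1 by rewrite /h ge_min lexx orbT.
pose I b := (\int[mu]_x (h b x)%:E)%E.
have I0 b : (0 <= I b)%E by apply: integral_ge0 => x _; rewrite lee_fin.
have I1 b : (I b <= 1)%E.
  apply: (@le_trans _ _ (\int[mu]_x (cst 1 x)%:E)%E).
    by apply: le_int => //; apply: aeW => x; exact: h1.
  have -> : (\int[mu]_x (cst 1 x)%:E)%E = (\int[mu]_x (cst 1%E) x)%E by [].
  rewrite integral_cst // mul1e.
  exact: probability_le1.
have Ifin b : I b \is a fin_num.
  by rewrite ge0_fin_numE // (le_lt_trans (I1 b)) // ltry.
pose Phi b := fine (I b).
have IE b : I b = (Phi b)%:E by rewrite fineK.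
have Phimono b b' : leJ b b' -> Phi b' <= Phi b.
  move=> bb'; rewrite -lee_fin -!IE; apply: le_int => //.
  apply: filterS (zdec _ _ bb') => x hx.
  by apply: min_mono; exact: max_mono.
pose alpha := inf (range Phi).
have hlb : has_lbound (range Phi).
  by exists 0 => _ [b _ <-]; rewrite /Phi fine_ge0.
have hinf : has_inf (range Phi) by split => //; exists (Phi j0), j0.
have alpha_le b : alpha <= Phi b by apply: ge_inf => //; exists b.
have exb n : exists b, Phi b < alpha + n.+1%:R^-1.
  have e0 : 0 < n.+1%:R^-1 :> R by rewrite invr_gt0 ltr0n.
  have [_ [b _ <-] hb] := inf_adherent e0 hinf.
  by exists b.
have [bs hbs] := choice exb.
pose c := fix c n := if n is n'.+1 then ub (c n', bs n) else bs 0%N.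
have cS n : leJ (c n) (c n.+1) := (hub (c n, bs n.+1)).1.
have bc n : leJ (bs n) (c n).
  by case: n => [|n]; [exact: lrefl | exact: (hub (c n, bs n.+1)).2].
have cmono n m : (n <= m)%N -> leJ (c n) (c m).
  elim: m => [|m IH]; first by rewrite leqn0 => /eqP->.
  rewrite leq_eqVlt => /orP[/eqP->|]; first exact: lrefl.
  by rewrite ltnS => nm; exact: ltrans (IH nm) (cS m).
have Phic n : Phi (c n) < alpha + n.+1%:R^-1 := le_lt_trans (Phimono _ _ (bc n)) (hbs n).
exists c; split => //.
pose hh m x := Num.max (z (c m) x) 0.
have hh0 m x : 0 <= hh m x by rewrite /hh le_max lexx orbT.
pose w x := infs (fun m => hh m x) 0.
have hhlb x : has_lbound (range (fun m => hh m x)) by exists 0 => _ [m _ <-].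
have mw : measurable_fun setT w.
  apply: (measurable_fun_infs (h := hh)) => // m.
  exact: measurable_maxr (mz _) (measurable_cst _).
have sd x : sdrop (fun m => hh m x) 0 = range (fun m => hh m x).
  by apply/seteqP; split => _ [m _ <-]; exists m.
have w_le x m : w x <= hh m x.
  by rewrite /w /infs /= sd; apply: ge_inf => //; exists m.
have w_ge0 x : 0 <= w x.
  rewrite /w /infs /= sd; apply: lb_le_inf; first by exists (hh 0%N x), 0%N.
  by move=> _ [m _ <-].
have w_adh x e : 0 < e -> exists m, hh m x < w x + e.
  move=> e0; have hi : has_inf (range (fun m => hh m x)).
    by split => //; exists (hh 0%N x), 0%N.
  have [_ [m _ <-] hm] := inf_adherent e0 hi.
  by exists m; rewrite /w /infs /= sd.
have h0E b x : (0 <= (h b x)%:E)%E by rewrite lee_fin.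
have claim b : {ae mu, forall x, Num.min (w x) 1 <= z b x}.
  pose k x := Num.max (Num.min (w x) 1 - Num.max (z b x) 0) 0.
  have mk : measurable_fun setT k.
    apply: measurable_maxr (measurable_cst _).
    apply: measurable_funB; first exact: measurable_minr mw (measurable_cst _).
    exact: measurable_maxr (mz b) (measurable_cst _).
  have k0 x : 0 <= k x by rewrite /k le_max lexx orbT.
  have k0E x : (0 <= (k x)%:E)%E by rewrite lee_fin.
  have mkE : measurable_fun setT (fun x => (k x)%:E) by exact/measurable_EFinP.
  pose K := (\int[mu]_x (k x)%:E)%E.
  have K0 : (0 <= K)%E by apply: integral_ge0 => x _.
  have Kle n : (K + I (ub (c n, b)) <= I (c n))%E.
    rewrite /K /I -(ge0_integralD mu measurableT (fun x _ => k0E x) mkE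
                   (fun x _ => h0E _ x) (mhE _)).
    apply: (ae_ge0_le_integral measurableT (fun x _ => adde_ge0 (k0E x) (h0E _ x))
              (emeasurable_funD mkE (mhE _)) (fun x _ => h0E _ x) (mhE _)).
    apply: (ae_imp _ (ae_and (zdec _ _ (hub (c n, b)).1) (zdec _ _ (hub (c n, b)).2))).
    move=> x [hx1 hx2] _ /=.
    rewrite -EFinD lee_fin /k /h; apply: key_ineq => //.
    exact: w_le.
  have Kfin : K \is a fin_num.
    rewrite ge0_fin_numE // (le_lt_trans _ (ltry (Phi (c 0%N)))) //.
    rewrite -IE; apply: le_trans (Kle 0%N); rewrite leeDl //.
  have Kn n : fine K * n.+1%:R < 1.
    have H : fine K + Phi (ub (c n, b)) <= Phi (c n).
      by rewrite -lee_fin EFinD fineK // -!IE; exact: Kle n.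
    have := alpha_le (ub (c n, b)); have := Phic n => H1 H2.
    have : fine K < n.+1%:R^-1.
      clear -H H1 H2; move: H H1 H2.
      move: (fine K) (Phi _) (Phi (c n)) alpha (n.+1%:R^-1) => a b' c' al r; lra.
    by rewrite -[n.+1%:R^-1]div1r ltr_pdivlMr ?ltr0n.
  have Kz : fine K = 0.
    apply/eqP; rewrite eq_le fine_ge0 // andbT leNgt; apply/negP => Kp.
    have := truncnS_gt ((fine K)^-1).
    move: (Num.Def.trunc _) => m hm.
    have : 1 < m.+1%:R * fine K by rewrite -ltr_pdivrMr // div1r.
    have := Kn m; rewrite mulrC; lra.
  have KE : K = 0%E by rewrite -(fineK Kfin) Kz.
  have aek : {ae mu, forall x, k x = 0}.
    have : (\int[mu]_x `|(k x)%:E|)%E = 0%E.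
      by rewrite -KE; apply: eq_integral => x _; rewrite gee0_abs.
    move/(ae_eq_integral_abs mu measurableT mkE); apply: ae_imp => x /(_ Logic.I).
    by case.
  apply: (ae_imp _ (ae_and aek (z0 b))) => x [kx zx] /=.
  move: kx; rewrite /k.
  have -> : Num.max (z b x) 0 = z b x by apply/max_idPl.
  move=> kx; have : Num.min (w x) 1 - z b x <= 0 by rewrite -kx le_max lexx.
  lra.
have aew : {ae mu, forall x, Num.min (w x) 1 <= 0}.
  apply: (zinf (fun x => Num.min (w x) 1)) => //.
  apply: (Xdom hX (measurable_minr mw (measurable_cst _)) X1) => x.
  rewrite normr1 ger0_norm; first by rewrite ge_min lexx orbT.
  by rewrite le_min w_ge0 ler01.
apply: (ae_imp _ aew) => x hx e e0.
have wx0 : w x = 0.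
  apply/eqP; rewrite eq_le w_ge0 andbT; move: hx.
  by case: (leP (w x) 1) => // ?; lra.
have [m hm] := w_adh x e e0.
exists m; move: hm; rewrite wx0 add0r /hh => hm.
by apply: le_lt_trans hm; rewrite le_max lexx.
Qed.
End Red.

Section Final.
Context {d : measure_display} {T : measurableType d} {R : realType}.
Context (mu : probability T R) (X Y : set (T -> R)).
Context (hX : ideal mu X) (hY : sublattice mu X Y) (h1 : Y (fun _ => 1)).

Lemma dir_ba : Y = L0_of (sigmaY mu Y) `&` X -> order_closed mu X Y.
Proof.
move=> hEq I leI xn x0 dirI Yxn Xx0 [J [leJ [z [dirJ [Xz [hz conv]]]]]].
have X1 : X (fun _ => 1) := YX hY h1.
have [c [cmono aec]] := countable_red hX X1 dirJ Xz hz.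
have [a0 ha0] := choice conv.
pose y n := xn (a0 (c n)).
have hy n : {ae mu, forall x, `|y n x - x0 x| <= z (c n) x}.
  exact: (ha0 (c n) (a0 (c n)) (dirI.2.1 _)).
have hdec : {ae mu, forall x, forall n m, (n <= m)%N -> z (c m) x <= z (c n) x}.
  apply: ae_foralln => n; apply: ae_foralln => m.
  case: (leqP n m) => nm.
    by apply: (ae_imp _ (hz.1 _ _ (cmono _ _ nm))) => x h _.
  by apply: aeW.
have aeall := ae_and aec (ae_and hdec (ae_foralln hy)).
have [N [mN N0 PN]] := aeall.
rewrite hEq; split => //; split.
  by have := Xmeas hX Xx0.
move=> B mB.
pose Dg := setT `\` N.
have GN : sigmaY mu Y N by apply: sub_sigma_algebra; right.
have GD : sigmaY mu Y Dg.
  exact: (@measurableD _ (g_sigma_algebraType (Gens mu Y)) _ _ (@measurableT _ (g_sigma_algebraType (Gens mu Y))) GN).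
have mx0 : measurable_fun (Dg : set (g_sigma_algebraType (Gens mu Y))) x0.
  apply: (@measurable_fun_cvg _ (g_sigma_algebraType (Gens mu Y)) R Dg y x0).
    move=> m; apply: (measurable_funS (@measurableT _ (g_sigma_algebraType (Gens mu Y)))) => //.
    have : Y (y m) := Yxn _.
    by rewrite {1}hEq => -[Ly _]; exact: L0_meas' Ly.
  move=> x [_ Nx].
  have [hx1 [hx2 hx3]] : (fun x => (forall e, 0 < e -> exists n, z (c n) x < e) /\
     (forall n m, (n <= m)%N -> z (c m) x <= z (c n) x) /\
     (forall n, `|y n x - x0 x| <= z (c n) x)) x.
    by apply: contra_notP Nx => Px; apply: PN.
  apply/(@cvgrPdist_lt _ R^o) => e e0.
  have [m hm] := hx1 e e0.
  exists m => // n /= mn.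
  rewrite distrC; apply: le_lt_trans (hx3 n) _.
  exact: le_lt_trans (hx2 _ _ mn) hm.
have mx0T : measurable (x0 @^-1` B).
  rewrite -[X in measurable X]setTI; exact: (Xmeas hX Xx0).
have -> : x0 @^-1` B = (Dg `&` x0 @^-1` B) `|` (N `&` x0 @^-1` B).
  apply/seteqP; split => x.
    by case: (pselect (N x)) => Nx Bx; [right|left].
  by case=> -[].
apply: (@measurableU _ (g_sigma_algebraType (Gens mu Y))).
  exact: mx0 GD B mB.
apply: sub_sigma_algebra; right; split; first exact: measurableI.
apply/eqP; rewrite -measure_le0 -N0; apply: le_measure; rewrite ?inE //.
  exact: measurableI.
Qed.
End Final.

Unset Implicit Arguments.

Theorem lemma2p2 (d : measure_display) (T : measurableType d) (R : realType)
  (mu : probability T R) (X Y : set (T -> R)) :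
  ideal mu X -> sublattice mu X Y -> Y (fun _ => 1) ->
  (order_closed mu X Y <-> Y = L0_of (sigmaY mu Y) `&` X).
Proof.
move=> hX hY h1; split; first exact: dir_ab.
exact: dir_ba.
Qed.
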